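(* Let $\mathbf{D}$ be a dagger kernel category. Then its dagger Karoubi envelope $\mathrm{Kar}_\dagger(\mathbf{D})$ is again a dagger kernel category. Explicitly, a zero object is $(0,\mathrm{id}_0)$, and for a morphism $f:(X,s)\to(Y,t)$ of $\mathrm{Kar}_\dagger(\mathbf{D})$, if $k:K\to X$ is the dagger kernel of $f$ in $\mathbf{D}$ and $s'=k^\dagger\circ s\circ k$ (the unique map with $k\circ s'=s\circ k$), then $s'$ is a self-adjoint idempotent on $K$ and $s\circ k:(K,s')\to(X,s)$ is a dagger kernel of $f$ in $\mathrm{Kar}_\dagger(\mathbf{D})$. Moreover the embedding $\mathcal{I}:\mathbf{D}\to\mathrm{Kar}_\dagger(\mathbf{D})$, $X\mapsto(X,\mathrm{id}_X)$, $f\mapsto f$, preserves the dagger, the zero object and kernels.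
   Context: A dagger category is a category $\mathbf{D}$ with a contravariant functor $\dagger$ that is the identity on objects and satisfies $f^{\dagger\dagger}=f$. A dagger mono is a morphism $k$ with $k^\dagger\circ k=\mathrm{id}$. A dagger kernel category is a dagger category with a zero object $0$ (yielding zero morphisms $X\to 0\to Y$) in which every morphism has a kernel that is a dagger mono. A self-adjoint idempotent is an endomorphism $s$ with $s^\dagger=s=s\circ s$. The dagger Karoubi envelope $\mathrm{Kar}_\dagger(\mathbf{D})$ has as objects pairs $(X,s)$ with $s$ a self-adjoint idempotent on $X$; a morphism $(X,s)\to(Y,t)$ is a morphism $f:X\to Y$ of $\mathbf{D}$ with $f\circ s=f=t\circ f$; composition is as in $\mathbf{D}$, the identity on $(X,s)$ is $s$, and the dagger is that of $\mathbf{D}$. *)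

(* Defs.v *)
From Stdlib Require Import ProofIrrelevance.

Set Implicit Arguments.

Record DagCat := {
  Ob : Type;
  Hom : Ob -> Ob -> Type;
  comp : forall X Y Z : Ob, Hom Y Z -> Hom X Y -> Hom X Z;
  idm : forall X : Ob, Hom X X;
  dag : forall X Y : Ob, Hom X Y -> Hom Y X;
  comp_assoc : forall X Y Z W (h : Hom Z W) (g : Hom Y Z) (f : Hom X Y),
      comp h (comp g f) = comp (comp h g) f;
  comp_id_l : forall X Y (f : Hom X Y), comp (idm Y) f = f;
  comp_id_r : forall X Y (f : Hom X Y), comp f (idm X) = f;
  dag_id : forall X, dag (idm X) = idm X;
  dag_comp : forall X Y Z (g : Hom Y Z) (f : Hom X Y),
      dag (comp g f) = comp (dag f) (dag g);
  dag_invol : forall X Y (f : Hom X Y), dag (dag f) = f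
}.

Arguments Hom {d} _ _.
Arguments comp {d X Y Z} _ _.
Arguments idm {d} _.
Arguments dag {d X Y} _.

Definition is_zero (D : DagCat) (Z : Ob D) : Prop :=
  (forall X : Ob D, exists f : Hom X Z, forall g : Hom X Z, g = f) /\
  (forall X : Ob D, exists f : Hom Z X, forall g : Hom Z X, g = f).

(** Zero morphisms: those factoring through a zero object
    (in a category with a zero object these are exactly X -> 0 -> Y). *)
Definition is_zero_mor (D : DagCat) {X Y : Ob D} (f : Hom X Y) : Prop :=
  exists (Z : Ob D) (a : Hom X Z) (b : Hom Z Y), is_zero D Z /\ f = comp b a.

Definition is_kernel (D : DagCat) {X Y K : Ob D} (f : Hom X Y) (k : Hom K X) : Prop :=
  is_zero_mor D (comp f k) /\
  forall (W : Ob D) (g : Hom W X), is_zero_mor D (comp f g) ->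
    exists h : Hom W K, comp k h = g /\ forall h' : Hom W K, comp k h' = g -> h' = h.

Definition dagger_mono (D : DagCat) {K X : Ob D} (k : Hom K X) : Prop :=
  comp (dag k) k = idm K.

Definition dagger_kernel_cat (D : DagCat) : Prop :=
  (exists Z : Ob D, is_zero D Z) /\
  forall (X Y : Ob D) (f : Hom X Y),
    exists (K : Ob D) (k : Hom K X), is_kernel D f k /\ dagger_mono D k.

Definition sa_idem (D : DagCat) {X : Ob D} (s : Hom X X) : Prop :=
  dag s = s /\ comp s s = s.

Definition KOb (D : DagCat) := {X : Ob D & {s : Hom X X | sa_idem D s}}.
Definition kcar (D : DagCat) (A : KOb D) : Ob D := projT1 A.
Definition kidem (D : DagCat) (A : KOb D) : Hom (kcar A) (kcar A) :=
  proj1_sig (projT2 A).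
Definition KarObj (D : DagCat) {X : Ob D} (s : Hom X X) (Hs : sa_idem D s) : KOb D :=
  existT _ X (exist _ s Hs).

Definition KHom (D : DagCat) (A B : KOb D) :=
  {f : Hom (kcar A) (kcar B) | comp f (kidem A) = f /\ comp (kidem B) f = f}.
Definition kval (D : DagCat) (A B : KOb D) (f : KHom A B) : Hom (kcar A) (kcar B) :=
  proj1_sig f.

Lemma kidem_sa (D : DagCat) (A : KOb D) : sa_idem D (kidem A).
Proof. exact (proj2_sig (projT2 A)). Qed.

Lemma khom_eq (D : DagCat) (A B : KOb D) (f g : KHom A B) :
  kval f = kval g -> f = g.
Proof.
  destruct f as [f Hf], g as [g Hg]; simpl; intros ->.
  f_equal; apply proof_irrelevance.
Qed.

Definition kcomp (D : DagCat) (A B C : KOb D) (g : KHom B C) (f : KHom A B) : KHom A C.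
Proof.
  refine (exist _ (comp (kval g) (kval f)) _).
  destruct g as [g [Hg1 Hg2]], f as [f [Hf1 Hf2]]; simpl; split.
  - rewrite <- comp_assoc, Hf1; reflexivity.
  - rewrite comp_assoc, Hg2; reflexivity.
Defined.

Definition kid (D : DagCat) (A : KOb D) : KHom A A.
Proof.
  refine (exist _ (kidem A) _).
  destruct (kidem_sa A) as [_ H]; split; exact H.
Defined.

Definition kdag (D : DagCat) (A B : KOb D) (f : KHom A B) : KHom B A.
Proof.
  refine (exist _ (dag (kval f)) _).
  destruct f as [f [Hf1 Hf2]]; simpl.
  destruct (kidem_sa A) as [HA _]; destruct (kidem_sa B) as [HB _].
  split.
  - rewrite <- HB. rewrite <- dag_comp, Hf2; reflexivity.
  - rewrite <- HA. rewrite <- dag_comp, Hf1; reflexivity.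
Defined.

Definition Kar (D : DagCat) : DagCat.
Proof.
  refine (@Build_DagCat (KOb D) (@KHom D) (@kcomp D) (@kid D) (@kdag D)
            _ _ _ _ _ _); intros; apply khom_eq; simpl.
  - apply comp_assoc.
  - destruct f as [f [H1 H2]]; exact H2.
  - destruct f as [f [H1 H2]]; exact H1.
  - destruct (kidem_sa X) as [H _]; exact H.
  - apply dag_comp.
  - apply dag_invol.
Defined.

Lemma idm_sa {D : DagCat} (X : Ob D) : sa_idem D (idm X).
Proof. split; [apply dag_id | apply comp_id_l]. Qed.

Definition KarI {D : DagCat} (X : Ob D) : Ob (Kar D) := KarObj (idm_sa X).

Definition KarI_mor {D : DagCat} {X Y : Ob D} (f : Hom X Y) :
  @Hom (Kar D) (KarI X) (KarI Y).
Proof.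
  refine (exist _ f _); simpl; split; [apply comp_id_r | apply comp_id_l].
Defined.

(* Main.v *)
Require Import Defs.
From Stdlib Require Import ProofIrrelevance Setoid.

Section S.
Variable D : DagCat.

Lemma zm_l {X Y Z : Ob D} (f : Hom X Y) (g : Hom Y Z) :
  is_zero_mor D f -> is_zero_mor D (comp g f).
Proof.
  intros [Z0 [a [b [H1 H2]]]]. exists Z0, a, (comp g b). split; auto.
  subst; apply comp_assoc.
Qed.

Lemma KarI_zero (Z : Ob D) : is_zero D Z -> is_zero (Kar D) (KarI Z).
Proof.
  intros [H1 H2]; split; intros X.
  - destruct (H1 (kcar X)) as [f0 Hf0].
    assert (P : comp f0 (kidem X) = f0 /\ comp (idm Z) f0 = f0).
    { split; [apply Hf0 | apply comp_id_l]. }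
    exists (exist _ f0 P : KHom X (KarI Z)). intros g. apply khom_eq. apply Hf0.
  - destruct (H2 (kcar X)) as [f0 Hf0].
    assert (P : comp f0 (idm Z) = f0 /\ comp (kidem X) f0 = f0).
    { split; [apply comp_id_r | apply Hf0]. }
    exists (exist _ f0 P : KHom (KarI Z) X). intros g. apply khom_eq. apply Hf0.
Qed.

Lemma zm_D_to_Kar (A B : KOb D) (f : KHom A B) :
  is_zero_mor D (kval f) -> is_zero_mor (Kar D) f.
Proof.
  intros [Z [a [b [HZ Hf]]]].
  destruct (kidem_sa A) as [_ HA]. destruct (kidem_sa B) as [_ HB].
  assert (Pa : comp (comp a (kidem A)) (kidem A) = comp a (kidem A) /\
               comp (idm Z) (comp a (kidem A)) = comp a (kidem A)).
  { split; [rewrite <- comp_assoc, HA; reflexivity | apply comp_id_l]. }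
  assert (Pb : comp (comp (kidem B) b) (idm Z) = comp (kidem B) b /\
               comp (kidem B) (comp (kidem B) b) = comp (kidem B) b).
  { split; [apply comp_id_r | rewrite comp_assoc, HB; reflexivity]. }
  exists (KarI Z), (exist _ _ Pa : KHom A (KarI Z)), (exist _ _ Pb : KHom (KarI Z) B).
  split; [apply KarI_zero; exact HZ|].
  apply khom_eq. simpl.
  destruct f as [f [F1 F2]]. simpl in Hf. change (f = comp (comp (kidem B) b) (comp a (kidem A))).
  rewrite <- comp_assoc, (comp_assoc _ _ _ _ _ b a), <- Hf, F1.
  symmetry; exact F2.
Qed.

Lemma zm_Kar_to_D (HD : dagger_kernel_cat D) (A B : KOb D) (f : KHom A B) :
  is_zero_mor (Kar D) f -> is_zero_mor D (kval f).
Proof.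
  intros [Z' [a [b [HZ Hf]]]].
  destruct HD as [[Z0 HZ0] _].
  destruct HZ as [H1 H2].
  destruct (H1 (KarI Z0)) as [v Hv]. destruct (H2 (KarI Z0)) as [u Hu].
  destruct (H1 Z') as [e He].
  assert (E : @comp (Kar D) _ _ _ v u = idm Z').
  { rewrite (He (comp v u)), (He (idm Z')). reflexivity. }
  assert (Hf' : f = @comp (Kar D) _ _ _ (@comp (Kar D) _ _ _ b v)
                                        (@comp (Kar D) _ _ _ u a)).
  { rewrite Hf, <- comp_assoc, (comp_assoc _ _ _ _ _ v u), E, comp_id_l. reflexivity. }
  rewrite Hf'. exists Z0, (kval (@comp (Kar D) _ _ _ u a)),
    (kval (@comp (Kar D) _ _ _ b v)). split; [exact HZ0| reflexivity].
Qed.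


Lemma dm_cancel {K X W : Ob D} (k : Hom K X) (x : Hom W K) :
  dagger_mono D k -> comp (dag k) (comp k x) = x.
Proof. intros H. rewrite comp_assoc, H. apply comp_id_l. Qed.

Lemma part3 (HD : dagger_kernel_cat D) :
  forall (A B : KOb D) (f : KHom A B) (K : Ob D) (k : Hom K (kcar A)),
        is_kernel D (kval f) k -> dagger_mono D k ->
        let s := kidem A in
        let s' := comp (dag k) (comp s k) in
        (comp k s' = comp s k /\
         forall u : Hom K K, comp k u = comp s k -> u = s') /\
        exists Hs : sa_idem D s',
        exists Hm : comp (comp s k) s' = comp s k /\ comp s (comp s k) = comp s k,
          is_kernel (Kar D) f (exist _ (comp s k) Hm : KHom (KarObj Hs) A) /\
          dagger_mono (Kar D) (exist _ (comp s k) Hm : KHom (KarObj Hs) A).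
Proof.
  intros A B f K k Hk Hdm. cbv zeta.
  destruct (kidem_sa A) as [S1 S2].
  set (s := kidem A) in *.
  assert (F1 : comp (kval f) s = kval f) by (destruct f as [f [F1 F2]]; exact F1).
  destruct Hk as [Hk1 Hk2].
  destruct (Hk2 _ (comp s k)) as [h [Hh _]].
  { rewrite comp_assoc, F1. exact Hk1. }
  assert (KS : comp k (comp (dag k) (comp s k)) = comp s k).
  { rewrite <- Hh, dm_cancel by exact Hdm. reflexivity. }
  split.
  { split; [exact KS|]. intros u Hu. rewrite <- Hu, dm_cancel by exact Hdm. reflexivity. }
  assert (Hs : sa_idem D (comp (dag k) (comp s k))).
  { split.
    - rewrite !dag_comp, dag_invol, S1, comp_assoc. reflexivity.
    - rewrite <- !comp_assoc, KS, (comp_assoc _ _ _ _ _ s s k), S2. reflexivity. }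
  exists Hs.
  assert (Hm : comp (comp s k) (comp (dag k) (comp s k)) = comp s k /\
               comp s (comp s k) = comp s k).
  { split.
    - rewrite <- comp_assoc, KS, comp_assoc, S2. reflexivity.
    - rewrite comp_assoc, S2. reflexivity. }
  exists Hm. split; [split|].
  - apply zm_D_to_Kar.
    change (is_zero_mor D (comp (kval f) (comp s k))).
    rewrite comp_assoc, F1. exact Hk1.
  - intros W g Hg. apply zm_Kar_to_D in Hg; [|exact HD].
    change (is_zero_mor D (comp (kval f) (kval g))) in Hg.
    destruct (Hk2 _ _ Hg) as [h0 [Hh0 _]].
    destruct g as [g [G1 G2]]. simpl in Hh0. subst g. change (kidem A) with s in G2.
    assert (P : comp h0 (kidem W) = h0 /\
                comp (comp (dag k) (comp s k)) h0 = h0).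
    { split.
      - rewrite <- (dm_cancel k (comp h0 (kidem W)) Hdm), (comp_assoc _ _ _ _ _ k h0), G1.
        apply dm_cancel; exact Hdm.
      - rewrite <- !comp_assoc, G2. apply dm_cancel; exact Hdm. }
    exists (exist _ h0 P : KHom W (KarObj Hs)). split.
    + apply khom_eq. change (comp (comp s k) h0 = comp k h0).
      rewrite <- comp_assoc. exact G2.
    + intros h' Eh'. apply (f_equal (@kval D _ _)) in Eh'.
      apply khom_eq. destruct h' as [h' [H1 H2]].
      change (comp (comp s k) h' = comp k h0) in Eh'.
      change (h' = h0).
      assert (E : comp k h' = comp k h0).
      { rewrite <- Eh'. rewrite <- H2 at 1. change (comp k (comp (comp (dag k) (comp s k)) h') = comp (comp s k) h').
        rewrite comp_assoc, KS. reflexivity. }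


      rewrite <- (dm_cancel k h' Hdm), E. apply dm_cancel; exact Hdm.
  - apply khom_eq.
    change (comp (dag (comp s k)) (comp s k) = comp (dag k) (comp s k)).
    rewrite dag_comp, S1, <- comp_assoc, (comp_assoc _ _ _ _ _ s s k), S2.
    reflexivity.
Qed.

End S.

Theorem mainTheorem1 (D : DagCat) (HD : dagger_kernel_cat D) :
  (* Kar_dagger(D) is a dagger kernel category *)
  dagger_kernel_cat (Kar D)
  (* (0, id_0) is a zero object *)
  /\ (forall Z : Ob D, is_zero D Z -> is_zero (Kar D) (KarI Z))
  (* explicit dagger kernels *)
  /\ (forall (A B : KOb D) (f : KHom A B) (K : Ob D) (k : Hom K (kcar A)),
        is_kernel D (kval f) k -> dagger_mono D k ->
        let s := kidem A in
        let s' := comp (dag k) (comp s k) in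
        (comp k s' = comp s k /\
         forall u : Hom K K, comp k u = comp s k -> u = s') /\
        exists Hs : sa_idem D s',
        exists Hm : comp (comp s k) s' = comp s k /\ comp s (comp s k) = comp s k,
          is_kernel (Kar D) f (exist _ (comp s k) Hm : KHom (KarObj Hs) A) /\
          dagger_mono (Kar D) (exist _ (comp s k) Hm : KHom (KarObj Hs) A))
  (* the embedding I is a functor preserving dagger, zero object and kernels *)
  /\ (forall X : Ob D, KarI_mor (idm X) = idm (KarI X))
  /\ (forall (X Y Z : Ob D) (g : Hom Y Z) (f : Hom X Y),
        KarI_mor (comp g f) = comp (KarI_mor g) (KarI_mor f))
  /\ (forall (X Y : Ob D) (f : Hom X Y), dag (KarI_mor f) = KarI_mor (dag f))
  /\ (forall (X Y K : Ob D) (f : Hom X Y) (k : Hom K X),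
        is_kernel D f k -> is_kernel (Kar D) (KarI_mor f) (KarI_mor k)).
Proof.
  assert (Z : forall Z : Ob D, is_zero D Z -> is_zero (Kar D) (KarI Z)) by apply KarI_zero.
  split; [|split; [exact Z|split; [apply part3; exact HD|]]].
  - split.
    + destruct HD as [[Z0 HZ0] _]. exists (KarI Z0). apply Z; exact HZ0.
    + intros X Y f. destruct HD as [HZ HK].
      destruct (HK _ _ (kval f)) as [K [k [Hk Hm]]].
      destruct (part3 D (conj HZ HK) X Y f K k Hk Hm) as [_ [Hs [Hm' [H1 H2]]]].
      eexists; eexists; split; [exact H1|exact H2].
  - split; [intros; apply khom_eq; reflexivity|].
    split; [intros; apply khom_eq; reflexivity|].
    split; [intros; apply khom_eq; reflexivity|].
    intros X Y K f k [Hk1 Hk2]. split.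
    + apply zm_D_to_Kar. exact Hk1.
    + intros W g Hg. apply zm_Kar_to_D in Hg; [|exact HD].
      change (is_zero_mor D (comp f (kval g))) in Hg.
      destruct (Hk2 _ _ Hg) as [h0 [Hh0 Hu]].
      destruct g as [g [G1 G2]]. simpl in Hh0. subst g.
      assert (P : comp h0 (kidem W) = h0 /\ comp (idm K) h0 = h0).
      { split; [|apply comp_id_l]. apply Hu. rewrite comp_assoc. exact G1. }
      exists (exist _ h0 P : KHom W (KarI K)). split.
      * apply khom_eq. reflexivity.
      * intros h' Eh'. apply (f_equal (@kval D _ _)) in Eh'.
        apply khom_eq. destruct h' as [h' H']. simpl. apply Hu. exact Eh'.
Qed.
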